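(* Let $X$ be a $T_1$ space and $\mathcal{P}$ an ideal of closed subsets of $X$ containing every singleton subset of $X$. The following are equivalent: (1) $C(X)=C(X)_\mathcal{P}$; (2) $X$ is discrete; (3) $C(X)_\mathcal{P}$ is a ring of quotients of $C(X)$.
   Context: An ideal of closed subsets of $X$ is a family $\mathcal{P}$ of closed subsets closed under finite unions and under passing to closed subsets. $D_f$ is the set of discontinuity points of $f\in\mathbb{R}^X$; $C(X)_\mathcal{P}=\{f\in\mathbb{R}^X\colon\overline{D_f}\in\mathcal{P}\}$; $C(X)$ is the ring of continuous real-valued functions on $X$. A ring $S$ containing a reduced ring $R$ is a ring of quotients of $R$ if for each $s\in S\setminus\{0\}$ there is $r\in R$ with $sr\in R\setminus\{0\}$. *)

(* Defs.v *)
From HB Require Import structures.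
From mathcomp Require Import all_boot all_order all_algebra.
From mathcomp Require Import all_classical all_reals all_analysis.
Set Implicit Arguments. Unset Strict Implicit. Unset Printing Implicit Defensive.
Import Order.TTheory GRing.Theory Num.Theory.
Import numFieldNormedType.Exports.
Local Open Scope classical_set_scope.
Local Open Scope ring_scope.

Definition discrete_top (X : topologicalType) : Prop := forall A : set X, open A.

Definition closed_ideal (X : topologicalType) (P : set (set X)) : Prop :=
  [/\ (forall A, P A -> closed A),
      P set0,
      (forall A B, P A -> P B -> P (A `|` B)) &
      (forall A B, P A -> closed B -> B `<=` A -> P B)].

Definition discont (X : topologicalType) (R : realType) (f : X -> R) : set X :=
  [set x : X | ~ {for x, continuous f}].

Definition CX (X : topologicalType) (R : realType) : set (X -> R) :=
  [set f | continuous f].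

Definition CXP (X : topologicalType) (R : realType) (P : set (set X)) :
  set (X -> R) := [set f | P (closure (discont f))].

Definition subring_fun (X : Type) (R : realType) (S : set (X -> R)) : Prop :=
  [/\ S (fun _ => 0), S (fun _ => 1),
      (forall f g, S f -> S g -> S (fun x => f x - g x)) &
      (forall f g, S f -> S g -> S (fun x => f x * g x))].

Definition ring_of_quotients (X : Type) (R : realType) (Rg S : set (X -> R)) : Prop :=
  [/\ subring_fun Rg, subring_fun S, Rg `<=` S &
      (forall s, S s -> s <> (fun _ => 0) ->
         exists2 r, Rg r & Rg (fun x => s x * r x) /\ (fun x => s x * r x) <> (fun _ => 0))].

(* Main.v *)
Require Import Defs.
From HB Require Import structures.
From mathcomp Require Import all_boot all_order all_algebra.
From mathcomp Require Import all_classical all_reals all_analysis.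
Import numFieldNormedType.Exports.
Import GRing.Theory Num.Theory.
Local Open Scope classical_set_scope.
Local Open Scope ring_scope.

Lemma disc_cont (R : realType) (X : topologicalType) (hd : discrete_top X)
  (f : X -> R) : continuous f.
Proof.
move=> x B /= fxB.
apply: (@filterS _ _ _ [set x]).
  by move=> y /= ->; exact: nbhs_singleton.
by apply: open_nbhs_nbhs; split => //; exact: hd.
Qed.

Lemma set1_open_disc (X : topologicalType) :
  (forall x : X, open [set x]) -> discrete_top X.
Proof.
move=> h A; rewrite openE => x Ax.
rewrite /interior.
apply: (@filterS _ _ _ [set x]); first by move=> y ->.
by apply: open_nbhs_nbhs; split => //; exact: h.
Qed.

Lemma g_open (R : realType) (X : topologicalType) (x : X) (g : X -> R) :
  {for x, continuous g} -> (forall y, y <> x -> g y = 0) -> g x != 0 ->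
  open [set x].
Proof.
move=> gc g0 gx.
have : nbhs x (g @^-1` [set z | z != 0]).
  apply: gc; apply: open_nbhs_nbhs; split => //; exact: open_neq.
move=> N; rewrite openE => y /= ->.
rewrite /interior.
apply: filterS N => z /= gz.
by apply/eqP; apply: contraNT gz => /eqP zx; rewrite g0.
Qed.

Definition ind1 (R : realType) (X : topologicalType) (x : X) : X -> R :=
  fun y => (y == x)%:R.

Lemma ind1_CXP (R : realType) (X : topologicalType) (P : set (set X))
  (hT1 : accessible_space X) (hP : closed_ideal P)
  (hsing : forall x : X, P [set x]) (x : X) : CXP P (@ind1 R X x).
Proof.
case: hP => _ _ _ hdown.
rewrite /CXP /=.
have cx : closed [set x] by exact: accessible_closed_set1.
apply: (hdown [set x]) => //; first exact: closed_closure.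
rewrite [Z in _ `<=` Z](closure_id _).1 //.
apply: closureS => y /= hy.
apply: contrapT => yx; apply: hy.
have op : open (~` [set x]) by exact: closed_openC.
move=> B /= hB.
have B0 : B 0.
  have := nbhs_singleton hB; rewrite /ind1.
  by rewrite (introF eqP yx).
apply: (@filterS _ _ _ (~` [set x])).
  move=> z /= zx; rewrite /ind1.
  by rewrite (introF eqP zx).
by apply: open_nbhs_nbhs; split.
Qed.

Theorem proposition5p4 (R : realType) (X : topologicalType) (P : set (set X))
  (hT1 : accessible_space X) (hP : closed_ideal P)
  (hsing : forall x : X, P [set x]) :
  [/\ (@CX X R = @CXP X R P <-> discrete_top X),
      (discrete_top X <-> ring_of_quotients (@CX X R) (@CXP X R P)) &
      (@CX X R = @CXP X R P <-> ring_of_quotients (@CX X R) (@CXP X R P))].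
Proof.
have hP' := hP; case: hP' => _ hP0 _ _.
have all_in : discrete_top X -> forall f : X -> R, CX f /\ CXP P f.
  move=> hd f; split; first exact: disc_cont.
  rewrite /CXP /=.
  have -> : discont f = set0.
    by apply/seteqP; split => // y /=; apply; exact: disc_cont.
  by rewrite closure0.
have i12 : @CX X R = @CXP X R P -> discrete_top X.
  move=> E; apply: set1_open_disc => x.
  have : CX (@ind1 R X x) by rewrite E; exact: ind1_CXP.
  move=> c; apply: (@g_open R X x (@ind1 R X x)).
  - exact: c.
  - by move=> y yx; rewrite /ind1; rewrite (introF eqP yx).
  - by rewrite /ind1 eqxx oner_neq0.
have i21 : discrete_top X -> @CX X R = @CXP X R P.
  move=> hd; apply/seteqP; split => f _; by case: (all_in hd f).
have sub_all : forall S : set (X -> R), (forall f, S f) -> subring_fun S.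
  by move=> S h; split => *; apply: h.
have i23 : discrete_top X -> ring_of_quotients (@CX X R) (@CXP X R P).
  move=> hd; split.
  - by apply: sub_all => f; case: (all_in hd f).
  - by apply: sub_all => f; case: (all_in hd f).
  - by move=> f _; case: (all_in hd f).
  - move=> s _ s0; exists (fun _ => 1).
      by case: (all_in hd (fun _ => 1)).
    split; first by case: (all_in hd (fun x => s x * 1)).
    by under eq_fun do rewrite mulr1.
have i32 : ring_of_quotients (@CX X R) (@CXP X R P) -> discrete_top X.
  case => _ _ _ hq; apply: set1_open_disc => x.
  have s0 : @ind1 R X x <> (fun _ => 0).
    move=> E; have := congr1 (fun f => f x) E; rewrite /ind1 eqxx /=.
    by move/eqP; rewrite oner_eq0.
  have [r _ [c nz]] := hq _ (@ind1_CXP R X P hT1 hP hsing x) s0.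
  have rx : r x != 0.
    apply/eqP => rx0; apply: nz; apply: funext => y /=; rewrite /ind1.
    by case: eqP => [->|_]; rewrite ?rx0 ?mulr0 ?mul0r.
  apply: (@g_open R X x (fun y => @ind1 R X x y * r y)).
  - exact: c.
  - by move=> y yx; rewrite /ind1; rewrite (introF eqP yx); rewrite mul0r.
  - by rewrite /ind1 eqxx mul1r.
split; [split; [exact: i12|exact: i21] | split; [exact: i23|exact: i32] | split].
- by move=> E; apply: i23; apply: i12.
- by move=> Q; apply: i21; apply: i32.
Qed.
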